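(* Let $n\ge1$ and $m\ge2$. The group $G_{n,m}$ generated by $s_0,\dots,s_m$ is a quotient of the affine Weyl group $\tilde C_m$.
   Context: The Yoke graph $Y_{n,m}$ has vertices the tuples $v=(v_0,\dots,v_{m+1})$ with $v_0,v_{m+1}\in\mathbb{Z}_n$, $v_1,\dots,v_m\in\{0,1\}$, $\sum v_i\equiv0\pmod n$ (bucket entries mod $n$). For $0\le i\le m$, $\overleftarrow{s}_i(v)$ replaces $v_i,v_{i+1}$ by $v_i+1,v_{i+1}-1$ and $\overrightarrow{s}_i(v)$ replaces them by $v_i-1,v_{i+1}+1$. Define permutations of the vertex set: $s_0(v)=\overleftarrow{s}_0(v)$ if $v_1=1$, $=\overrightarrow{s}_0(v)$ if $v_1=0$; $s_m(v)=\overleftarrow{s}_m(v)$ if $v_m=0$, $=\overrightarrow{s}_m(v)$ if $v_m=1$; for $1\le i\le m-1$, $s_i$ swaps entries $v_i,v_{i+1}$. $G_{n,m}$ is the subgroup of the symmetric group on the vertex set generated by $s_0,\dots,s_m$. The affine Weyl group $\tilde C_m$ is the group with generators $\sigma_0,\dots,\sigma_m$ and relations $\sigma_i^2=1$, $(\sigma_i\sigma_j)^2=1$ for $|i-j|>1$, $(\sigma_i\sigma_{i+1})^3=1$ for $1\le i\le m-2$, $(\sigma_0\sigma_1)^4=(\sigma_{m-1}\sigma_m)^4=1$. *)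

(* Defs.v *)
From HB Require Import structures.
From mathcomp Require Import all_boot all_fingroup.
From mathcomp Require Import zify.

Set Implicit Arguments.
Unset Strict Implicit.
Unset Printing Implicit Defensive.

Section Yoke.
Variables n m : nat.

(* a vertex (v_0, v_1..v_m, v_{m+1}); the bits v_1..v_m are stored 0-based *)
Definition raw := ('I_n * {ffun 'I_m -> bool} * 'I_n)%type.

Definition bitsum (b : {ffun 'I_m -> bool}) : nat := \sum_(j < m) (b j : nat).

Definition zero_sum (x : raw) : bool :=
  let: (a, b, c) := x in (a + bitsum b + c) %% n == 0.

Definition vertex := {x : raw | zero_sum x}.

Lemma ord_gt0 (a : 'I_n) : 0 < n.
Proof. by case: a => k /= /(leq_ltn_trans (leq0n k)). Qed.

Definition addm (a : 'I_n) (k : nat) : 'I_n :=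
  Ordinal (ltn_pmod (a + k) (ord_gt0 a)).
Definition inc (a : 'I_n) := addm a 1.
Definition dec (a : 'I_n) := addm a n.-1.

(* bit at 0-based position k (i.e. v_{k+1}) *)
Definition bitn (b : {ffun 'I_m -> bool}) (k : nat) : bool :=
  [exists j : 'I_m, (j == k :> nat) && b j].
Definition tog (k : nat) (b : {ffun 'I_m -> bool}) : {ffun 'I_m -> bool} :=
  [ffun j : 'I_m => if j == k :> nat then ~~ b j else b j].
(* exchange of the 0-based positions i-1 and i, i.e. of v_i and v_{i+1} *)
Definition sw (i : nat) (j : 'I_m) : 'I_m :=
  insubd j (if j == i.-1 :> nat then i else if j == i :> nat then i.-1 else nat_of_ord j).
Definition swapb (i : nat) (b : {ffun 'I_m -> bool}) : {ffun 'I_m -> bool} :=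
  [ffun j => b (sw i j)].

(* s_0 : v_1 = 1 -> (v_0+1, v_1-1) ; v_1 = 0 -> (v_0-1, v_1+1) *)
Definition s0raw (x : raw) : raw :=
  if m == 0 then x else
  let: (a, b, c) := x in
  if bitn b 0 then (inc a, tog 0 b, c) else (dec a, tog 0 b, c).
(* s_m : v_m = 0 -> (v_m+1, v_{m+1}-1) ; v_m = 1 -> (v_m-1, v_{m+1}+1) *)
Definition smraw (x : raw) : raw :=
  if m == 0 then x else
  let: (a, b, c) := x in
  if bitn b m.-1 then (a, tog m.-1 b, inc c) else (a, tog m.-1 b, dec c).
Definition smidraw (i : nat) (x : raw) : raw :=
  let: (a, b, c) := x in (a, swapb i b, c).

Definition sraw (i : 'I_m.+1) (x : raw) : raw :=
  if i == 0 :> nat then s0raw x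
  else if i == m :> nat then smraw x
  else smidraw i x.

Lemma bitn_ord (b : {ffun 'I_m -> bool}) (j : 'I_m) : bitn b j = b j.
Proof.
apply/existsP/idP => [[k /andP[/eqP/val_inj -> //]]|bj].
by exists j; rewrite eqxx.
Qed.

Lemma tog_sum k b (hk : k < m) :
  bitsum (tog k b) + bitn b k = bitsum b + ~~ bitn b k.
Proof.
rewrite /bitsum (bigD1 (Ordinal hk)) //= [in RHS](bigD1 (Ordinal hk)) //=.
rewrite ffunE eqxx -[k]/(nat_of_ord (Ordinal hk)) bitn_ord.
rewrite (eq_bigr (fun j => (b j : nat))); last first.
  by move=> j hj; rewrite ffunE; case: eqP => // hjk; case/eqP: hj; apply: val_inj.
by rewrite addnC addnA [RHS]addnAC.
Qed.

Lemma tog_tog k b : tog k (tog k b) = b.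
Proof. by apply/ffunP => j; rewrite !ffunE; case: eqP => //; rewrite negbK. Qed.

Lemma bitn_tog k b (hk : k < m) : bitn (tog k b) k = ~~ bitn b k.
Proof.
by rewrite -[k]/(nat_of_ord (Ordinal hk)) !bitn_ord ffunE eqxx.
Qed.

Lemma val_sw i (j : 'I_m) (hi : 0 < i < m) :
  nat_of_ord (sw i j) =
  (if j == i.-1 :> nat then i else if j == i :> nat then i.-1 else nat_of_ord j).
Proof.
case/andP: hi => hi0 him.
have hi1 : i.-1 < m by rewrite (leq_ltn_trans (leq_pred i)).
rewrite /sw insubdK // unfold_in /=.
by case: ifP => // _; case: ifP.
Qed.

Lemma sw_inv i (hi : 0 < i < m) : involutive (sw i).
Proof.
move=> j; apply: ord_inj; rewrite !val_sw //.
case/andP: hi => hi0 him.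
have hne : (i.-1 == i) = false by case: (i) hi0 => //= k _; rewrite eqn_leq ltnn andbF.
case: (eqVneq (nat_of_ord j) i.-1) => [->|h1]; first by rewrite eqxx [i == _]eq_sym hne.
case: (eqVneq (nat_of_ord j) i) => [->|h2]; first by rewrite eqxx.
by rewrite (negbTE h1) (negbTE h2).
Qed.

Lemma swapb_sum i b (hi : 0 < i < m) : bitsum (swapb i b) = bitsum b.
Proof.
rewrite /bitsum (reindex_inj (inv_inj (sw_inv hi))) /=.
by apply: eq_bigr => j _; rewrite ffunE sw_inv.
Qed.

Lemma swapb_inv i b (hi : 0 < i < m) : swapb i (swapb i b) = b.
Proof. by apply/ffunP => j; rewrite !ffunE sw_inv. Qed.

Lemma inc_dec (a : 'I_n) : inc (dec a) = a.
Proof.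
apply: val_inj => /=; rewrite modnDml -addnA addn1 prednK ?(ord_gt0 a) //.
by rewrite modnDr modn_small.
Qed.

Lemma dec_inc (a : 'I_n) : dec (inc a) = a.
Proof.
apply: val_inj => /=; rewrite modnDml -addnA add1n prednK ?(ord_gt0 a) //.
by rewrite modnDr modn_small.
Qed.

Lemma sraw_inv i : involutive (sraw i).
Proof.
move=> [[a b] c]; rewrite /sraw.
have [hi0|hi0] := eqVneq (nat_of_ord i) 0.
  rewrite /s0raw; case: eqP => // /eqP hm; have hm0 : 0 < m by rewrite lt0n.
  by case hb: (bitn b 0); rewrite bitn_tog // hb /= tog_tog ?dec_inc ?inc_dec.

have [him|him] := eqVneq (nat_of_ord i) m.
  rewrite /smraw; case: eqP => // /eqP hm.
  have hm0 : m.-1 < m by rewrite prednK ?lt0n.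
  by case hb: (bitn b m.-1); rewrite bitn_tog // hb /= tog_tog ?dec_inc ?inc_dec.

have hi : 0 < i < m by rewrite lt0n hi0 ltn_neqAle him -ltnS ltn_ord.
by rewrite /smidraw swapb_inv.
Qed.

Lemma sraw_pres i x : zero_sum x -> zero_sum (sraw i x).
Proof.
case: x => [[a b] c]; rewrite /sraw /zero_sum => /eqP hx.
have n0 := ord_gt0 a.
have [hi0|hi0] := eqVneq (nat_of_ord i) 0.
  rewrite /s0raw; case: eqP => [_|/eqP hm]; first by apply/eqP.
  have hm0 : 0 < m by rewrite lt0n.
  have := tog_sum b hm0; case hb: (bitn b 0) => /= hs; apply/eqP;
    rewrite -!addnA modnDml !addnA.
    by have -> : a + 1 + bitsum (tog 0 b) + c = a + bitsum b + c by lia.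
  have -> : a + n.-1 + bitsum (tog 0 b) + c = a + bitsum b + c + n by lia.
  by rewrite modnDr.
have [him|him] := eqVneq (nat_of_ord i) m.
  rewrite /smraw; case: eqP => [_|/eqP hm]; first by apply/eqP.
  have hm0 : m.-1 < m by rewrite prednK ?lt0n.
  have := tog_sum b hm0; case hb: (bitn b m.-1) => /= hs; apply/eqP;
    rewrite modnDmr.
    by have -> : a + bitsum (tog m.-1 b) + (c + 1) = a + bitsum b + c by lia.
  have -> : a + bitsum (tog m.-1 b) + (c + n.-1) = a + bitsum b + c + n by lia.
  by rewrite modnDr.
have hi : 0 < i < m by rewrite lt0n hi0 ltn_neqAle him -ltnS ltn_ord.
by rewrite /smidraw swapb_sum // hx.
Qed.

Definition sV (i : 'I_m.+1) (v : vertex) : vertex :=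
  Sub (sraw i (val v)) (sraw_pres i (valP v)).

Lemma sV_inv i : involutive (sV i).
Proof. by move=> v; apply: val_inj; rewrite /= sraw_inv. Qed.

Definition s (i : 'I_m.+1) : {perm vertex} := perm (inv_inj (sV_inv i)).

Definition G : {group {perm vertex}} := <<[set s i | i : 'I_m.+1]>>%G.

(* Since sigma_i^2 = 1 is a relation, the group is the monoid of words in
   0..m modulo the congruence generated by the relators. *)
Definition alt (i j : 'I_m.+1) (k : nat) : seq 'I_m.+1 :=
  flatten (nseq k [:: i; j]).

Definition cox_relator (w : seq 'I_m.+1) : Prop :=
  (exists i, w = [:: i; i]) \/
  [\/ (exists i j : 'I_m.+1, (i.+1 < j \/ j.+1 < i) /\ w = alt i j 2),
      (exists i j : 'I_m.+1, [/\ 1 <= i, i <= m - 2, nat_of_ord j = i.+1 & w = alt i j 3]),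
      (exists i j : 'I_m.+1, [/\ nat_of_ord i = 0, nat_of_ord j = 1 & w = alt i j 4])
    | (exists i j : 'I_m.+1, [/\ nat_of_ord i = m - 1, nat_of_ord j = m & w = alt i j 4])].

Inductive cox_equiv : seq 'I_m.+1 -> seq 'I_m.+1 -> Prop :=
| cox_rel x r y : cox_relator r -> cox_equiv (x ++ r ++ y) (x ++ y)
| cox_refl w : cox_equiv w w
| cox_sym u v : cox_equiv u v -> cox_equiv v u
| cox_trans u v w : cox_equiv u v -> cox_equiv v w -> cox_equiv u w.

End Yoke.

(* Main.v *)
Require Import Defs.
From mathcomp Require Import all_boot all_fingroup.
From mathcomp Require Import zify.
Set Implicit Arguments.
Unset Strict Implicit.
Unset Printing Implicit Defensive.

Section H.
Variables n m : nat.

Definition swn (i k : nat) := if k == i.-1 then i else if k == i then i.-1 else k.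

Lemma bitn_ge (b : {ffun 'I_m -> bool}) j : m <= j -> bitn b j = false.
Proof.
move=> hj; apply/existsP => [[k /andP[/eqP hk _]]].
by move: (ltn_ord k); rewrite hk ltnNge hj.
Qed.

Lemma bitn_togE (b : {ffun 'I_m -> bool}) k j : k < m ->
  bitn (tog k b) j = if j == k then ~~ bitn b j else bitn b j.
Proof.
move=> hk; case: (ltnP j m) => hj.
  by rewrite -[j]/(nat_of_ord (Ordinal hj)) !bitn_ord ffunE.
rewrite !bitn_ge //; case: eqP => // ejk; move: hk; rewrite -ejk ltnNge hj //.
Qed.

Lemma bitn_swapE (b : {ffun 'I_m -> bool}) i j : 0 < i < m ->
  bitn (swapb i b) j = bitn b (swn i j).
Proof.
move=> hi; case: (ltnP j m) => hj.
  rewrite -[j]/(nat_of_ord (Ordinal hj)) !bitn_ord ffunE.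
  by rewrite -bitn_ord val_sw.
rewrite !bitn_ge // /swn; case/andP: hi => h1 h2.
case: eqP => [e|_]; first lia.
case: eqP => [e|_]; lia.
Qed.

Lemma bitn_inj (b b' : {ffun 'I_m -> bool}) :
  (forall j, j < m -> bitn b j = bitn b' j) -> b = b'.
Proof.
move=> h; apply/ffunP => j; rewrite -!bitn_ord; exact: h.
Qed.


Ltac noif t := lazymatch t with context[if _ then _ else _] => fail | _ => idtac end.
Ltac crush := rewrite /swn; repeat (match goal with |- context[(?x == ?y)] =>
   noif x; noif y; case: (x =P y) => ? end); try lia; rewrite ?negbK; repeat f_equal; lia.

Lemma srawE0 (i : 'I_m.+1) (x : raw n m) : nat_of_ord i = 0 -> sraw i x = s0raw x.
Proof. by rewrite /sraw => ->. Qed.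
Lemma srawEm (i : 'I_m.+1) (x : raw n m) : 0 < m -> nat_of_ord i = m -> sraw i x = smraw x.
Proof. by rewrite /sraw => hm ->; rewrite eqxx; case: eqP => // e; lia. Qed.
Lemma srawEmid (i : 'I_m.+1) (x : raw n m) : 0 < i < m -> sraw i x = smidraw i x.
Proof. rewrite /sraw => h; case: eqP => e; first lia. by case: eqP => e'; first lia. Qed.

Lemma s0rawE a b c : 0 < m ->
  s0raw (a, b, c) = (if bitn b 0 then inc a else dec a, tog 0 b, c) :> raw n m.
Proof. by rewrite /s0raw => hm; case: eqP => [e|_]; [lia| case: bitn]. Qed.
Lemma smrawE a b c : 0 < m ->
  smraw (a, b, c) = (a, tog m.-1 b, if bitn b m.-1 then inc c else dec c) :> raw n m.
Proof. by rewrite /smraw => hm; case: eqP => [e|_]; [lia| case: bitn]. Qed.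
Lemma smidrawE i a b c : smidraw i (a, b, c) = (a, swapb i b, c) :> raw n m.
Proof. by []. Qed.

Lemma tog_comm k l (b : {ffun 'I_m -> bool}) : tog k (tog l b) = tog l (tog k b).
Proof. by apply/ffunP => j; rewrite !ffunE; case: eqP; case: eqP. Qed.

Lemma sraw_comm (i j : 'I_m.+1) (x : raw n m) : 2 <= m -> i.+1 < j ->
  sraw i (sraw j x) = sraw j (sraw i x).
Proof.
move=> hm hij; have hj := ltn_ord j; case: x => [[a b] c].
have hm0 : 0 < m by lia.
have hm1 : m.-1 < m by lia.
case: (posnP i) => hi;
 [have Ei : forall y : raw n m, sraw i y = s0raw y by move=> y; exact: srawE0
 |have Ei : forall y : raw n m, sraw i y = smidraw i y by move=> y; apply: srawEmid; lia];
(case: (eqVneq (nat_of_ord j) m) => hjm;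
 [have Ej : forall y : raw n m, sraw j y = smraw y by move=> y; exact: srawEm
 |have Ej : forall y : raw n m, sraw j y = smidraw j y by move=> y; apply: srawEmid; lia]);
rewrite !Ei !Ej; rewrite ?(s0rawE, smrawE, smidrawE) //.
- have e1 : (m.-1 == 0) = false by apply/eqP; lia.
  have e2 : (0 == m.-1) = false by apply/eqP; lia.
  rewrite !bitn_togE // e1 e2.
  by rewrite tog_comm.
- rewrite bitn_swapE; last lia. have -> : swn j 0 = 0 by crush.
  congr (_, _, _); apply: bitn_inj => k hk; rewrite !(bitn_togE, bitn_swapE) //; try lia; crush.
- rewrite bitn_swapE; last lia. have -> : swn i m.-1 = m.-1 by crush.
  congr (_, _, _); apply: bitn_inj => k hk; rewrite !(bitn_togE, bitn_swapE) //; try lia; crush.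
- congr (_, _, _); apply: bitn_inj => k hk; rewrite !bitn_swapE //; try lia; crush.
Qed.


Lemma inc_dec_ifs (a : 'I_n) (p : bool) :
  (if ~~ p then inc (if p then inc a else dec a) else dec (if p then inc a else dec a)) = a.
Proof. by case: p; rewrite /= ?inc_dec ?dec_inc. Qed.

Lemma relator_id (r : seq 'I_m.+1) (x : raw n m) : 2 <= m -> cox_relator r ->
  foldl (fun x i => sraw i x) x r = x.
Proof.
move=> hm hr; have hm0 : 0 < m by lia.
have hm1 : m.-1 < m by lia.
case: hr => [[i ->]|[[i [j [hij ->]]]|[i [j [hi1 hi2 hj ->]]]|[i [j [hi hj ->]]]|[i [j [hi hj ->]]]]] /=.
- by rewrite sraw_inv.
- have hij' : i.+1 < j \/ j.+1 < i := hij.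
  case: hij' => h.
    by rewrite (sraw_comm _ hm h) sraw_inv sraw_inv.
  by rewrite (sraw_comm _ hm h) sraw_inv sraw_inv.
- have Ei : forall y : raw n m, sraw i y = smidraw i y by move=> y; apply: srawEmid; lia.
  have Ej : forall y : raw n m, sraw j y = smidraw j y by move=> y; apply: srawEmid; lia.
  case: x => [[a b] c]; rewrite !Ei !Ej /=; congr (_, _, _).
  apply: bitn_inj => k hk; rewrite !bitn_swapE; try lia. crush.
- have Ei : forall y : raw n m, sraw i y = s0raw y by move=> y; apply: srawE0.
  have Ej : forall y : raw n m, sraw j y = smidraw j y by move=> y; apply: srawEmid; lia.
  case: x => [[a b] c]; rewrite !Ei !Ej /=.
  rewrite ?(s0rawE, smidrawE) // hj; congr (_, _, _).
    rewrite !(bitn_swapE, bitn_togE) //= /swn /=.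
    by case: (bitn b 0); case: (bitn b 1); rewrite /= ?inc_dec ?dec_inc.
  apply: bitn_inj => k hk; rewrite !(bitn_swapE, bitn_togE) //; crush.
- have Ei : forall y : raw n m, sraw i y = smidraw i y by move=> y; apply: srawEmid; lia.
  have Ej : forall y : raw n m, sraw j y = smraw y by move=> y; apply: srawEm.
  case: x => [[a b] c]; rewrite !Ei !Ej /=.
  have hm2 : 0 < m.-1 < m by lia.
  rewrite ?(smrawE, smidrawE) // hi; congr (_, _, _); last first.
    have hmp : m - 1 = m.-1 by lia.
    have e1 : (m.-1 == m.-1.-1) = false by apply/eqP; lia.
    have e2 : (m.-1.-1 == m.-1) = false by apply/eqP; lia.
    rewrite hmp !(bitn_swapE, bitn_togE) // /swn.
    move: e1 e2; generalize (m.-2) (m.-1) => q p e1 e2; rewrite ?(eqxx, e1, e2) /=.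
    by case: (bitn b p); case: (bitn b p.-1); rewrite /= ?inc_dec ?dec_inc.
  apply: bitn_inj => k hk; have hmp : m - 1 = m.-1 by lia.
  rewrite hmp !(bitn_swapE, bitn_togE) //; try lia.
  move: hm2 hk; generalize (m.-1) => p hp hk. crush.
Qed.

End H.

Lemma prod_apply n m (w : seq 'I_m.+1) (v : vertex n m) :
  val ((\prod_(i <- w) @s n m i)%g v) = foldl (fun x i => sraw i x) (val v) w.
Proof.
elim: w v => [|i w IH] v /=; first by rewrite big_nil perm1.
by rewrite big_cons permM IH /s permE.
Qed.

Theorem corollary3p16 (n m : nat) : 1 <= n -> 2 <= m ->
  exists f : seq 'I_m.+1 -> {perm vertex n m},
    [/\ (forall u v, f (u ++ v) = (f u * f v)%g),
        (forall u v, cox_equiv u v -> f u = f v),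
        (forall w, f w \in G n m) &
        (forall g, g \in G n m -> exists w, f w = g)].
Proof.
move=> hn hm.
exists (fun w => (\prod_(i <- w) @s n m i)%g); split.
- by move=> u v; rewrite big_cat.
- have hr : forall r, cox_relator r -> (\prod_(i <- r) @s n m i)%g = 1%g.
    move=> r hr; apply/permP => v; rewrite perm1; apply: val_inj.
    by rewrite prod_apply relator_id.
  move=> u v; elim => {u v} [x r y /hr h|w|u v _ ->|u v w _ -> _ ->] //.
  by rewrite !big_cat h Monoid.mul1m.
- move=> w; apply: group_prod => i _; apply: mem_gen; exact: imset_f.
- move=> g /gen_prodgP [k [c hc ->]].
  have hc' : forall i, exists j, c i == @s n m j.
    by move=> i; case/imsetP: (hc i) => j _ ->; exists j.
  pose d i := xchoose (hc' i).
  exists [seq d i | i <- index_enum 'I_k].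
  rewrite big_map; apply: eq_bigr => i _.
  by rewrite (eqP (xchooseP (hc' i))).
Qed.
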